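(* Let $\mathsf P$ be a one-move rider with basic move $(c,d)$ and let $\mathcal B$ be a board. The denominator of the inside-out polytope $(\mathcal B^q,\mathcal A_{\mathsf P})$ equals the least common denominator of the corners of $\mathcal B$ when $q=1$, and when $q\ge2$ it equals the least common denominator of the corners of $\mathcal B$ and their antipodes.
   Context: A board $\mathcal B$ is a convex polygon in $\mathbb R^2$ with rational corners (vertices). A one-move rider has a single basic move $(c,d)\in\mathbb Z^2\setminus\{0\}$ with $\gcd(c,d)=1$. For $q$ pieces, $\mathcal A_{\mathsf P}$ is the arrangement in $\mathbb R^{2q}$ of hyperplanes $\mathcal H_{ij}=\{(z_1,\dots,z_q):(z_j-z_i)\cdot(d,-c)=0\}$, $1\le i<j\le q$. A vertex of $(\mathcal B^q,\mathcal A_{\mathsf P})$ is a point of $\mathcal B^q$ that is the unique point of an intersection of some of these hyperplanes and some affine hulls of facets of $\mathcal B^q$; the denominator of $(\mathcal B^q,\mathcal A_{\mathsf P})$ is the least common multiple of the least common denominators of the coordinates of its vertices. For a corner $z$ of $\mathcal B$, its antipode is the other point (if any) where the line through $z$ parallel to $(c,d)$ meets the boundary of $\mathcal B$ (possibly another corner); if $(c,d)$ is parallel to an edge $z_iz_j$ of $\mathcal B$, the corners $z_i$ and $z_j$ are each other's antipodes. The least common denominator of a set of rational points is the least common multiple of the denominators of all their coordinates. *)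

(* Defs.v *)
From HB Require Import structures.
From mathcomp Require Import all_boot all_order all_algebra.
Set Implicit Arguments. Unset Strict Implicit. Unset Printing Implicit Defensive.
Import Order.TTheory GRing.Theory Num.Theory.
Local Open Scope ring_scope.

Definition pt := (rat * rat)%type.
Definition subp (u v : pt) : pt := (u.1 - v.1, u.2 - v.2).
Definition dotp (u v : pt) : rat := u.1 * v.1 + u.2 * v.2.
Definition cross (u v : pt) : rat := u.1 * v.2 - u.2 * v.1.

Definition in_hull (cs : seq pt) (x : pt) : Prop :=
  exists l : 'I_(size cs) -> rat,
    (forall k, 0 <= l k) /\ \sum_(k < size cs) l k = 1 /\
    x.1 = \sum_(k < size cs) l k * (nth (0, 0) cs k).1 /\
    x.2 = \sum_(k < size cs) l k * (nth (0, 0) cs k).2.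

(* cs is the list of corners of a board: a (2-dimensional) convex polygon
   with rational corners; the board is conv(cs) and the corners are exactly
   the extreme points, listed without repetition. *)
Definition is_board (cs : seq pt) : Prop :=
  uniq cs /\
  (forall z, z \in cs -> ~ in_hull [seq y <- cs | y != z] z) /\
  (exists a b e, [/\ a \in cs, b \in cs, e \in cs &
                   cross (subp b a) (subp e a) != 0]).

(* [a b] is an edge of the board (oriented so the board lies to its left). *)
Definition edge (cs : seq pt) (a b : pt) : Prop :=
  [/\ a \in cs, b \in cs, a != b &
      forall y, y \in cs -> 0 <= cross (subp b a) (subp y a)].

Definition mv (c d : int) : pt := (c%:~R, d%:~R).

(* Constraints of the inside-out polytope (B^q, A_P):
   CH i j   : the hyperplane H_ij  {(z_j - z_i).(d,-c) = 0}  (valid if i < j)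
   CF i a b : the affine hull of the facet of B^q where z_i lies in edge [a b],
              i.e. { cross (b - a) (z_i - a) = 0 }. *)
Inductive constr (q : nat) :=
| CH of 'I_q & 'I_q
| CF of 'I_q & pt & pt.

Definition cvalid (cs : seq pt) (q : nat) (k : constr q) : Prop :=
  match k with
  | CH i j => (i < j)%N
  | CF _ a b => edge cs a b
  end.

Definition cholds (c d : int) (q : nat) (k : constr q) (z : 'I_q -> pt) : Prop :=
  match k with
  | CH i j => dotp (subp (z j) (z i)) (d%:~R, - c%:~R) = 0
  | CF i a b => cross (subp b a) (subp (z i) a) = 0
  end.

(* z is a vertex of (B^q, A_P): z in B^q and z is the unique point of the
   intersection of some family S of the above hyperplanes / facet hulls. *)
Definition is_vertex (c d : int) (cs : seq pt) (q : nat) (z : 'I_q -> pt) : Prop :=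
  (forall i, in_hull cs (z i)) /\
  exists S : constr q -> Prop,
    (forall k, S k -> cvalid cs k) /\
    (forall w : 'I_q -> pt,
        (forall k, S k -> cholds c d k w) <-> (forall i, w i = z i)).

Definition den2 (p : pt) : nat := lcmn `|denq p.1|%N `|denq p.2|%N.
Definition denq_cfg (q : nat) (z : 'I_q -> pt) : nat :=
  \big[lcmn/1%N]_(i < q) den2 (z i).

Definition lcm_of (P : nat -> Prop) (D : nat) : Prop :=
  forall m, (D %| m)%N <-> (forall n, P n -> (n %| m)%N).

Definition on_boundary (cs : seq pt) (p : pt) : Prop :=
  in_hull cs p /\ exists a b, edge cs a b /\ cross (subp b a) (subp p a) = 0.

Definition par_edge (c d : int) (cs : seq pt) (z z' : pt) : Prop :=
  (edge cs z z' \/ edge cs z' z) /\ cross (subp z' z) (mv c d) = 0.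

Definition antipode (c d : int) (cs : seq pt) (z p : pt) : Prop :=
  par_edge c d cs z p \/
  ((~ exists z', par_edge c d cs z z') /\
   on_boundary cs p /\ p <> z /\ cross (subp p z) (mv c d) = 0).

(* Main.v *)
From Stdlib Require Import Classical ClassicalEpsilon.
Require Import Defs.
From HB Require Import structures.
From mathcomp Require Import all_boot all_order all_algebra.
From mathcomp Require Import ring lra.
Import Order.TTheory GRing.Theory Num.Theory.
Local Open Scope ring_scope.
Set Implicit Arguments. Unset Strict Implicit. Unset Printing Implicit Defensive.

Lemma pt_eq (x y : pt) : x.1 = y.1 -> x.2 = y.2 -> x = y.
Proof. by case: x y => [x1 x2] [y1 y2] /= -> ->. Qed.

Lemma par_trans (u x y : pt) : u != (0,0) -> cross u x = 0 -> cross u y = 0 -> cross x y = 0.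
Proof.
case: u x y => [u1 u2] [x1 x2] [y1 y2]; rewrite /cross /= => u0 hx hy.
have e1 : u1 * (x1 * y2 - x2 * y1) = x1 * (u1 * y2 - u2 * y1) - y1 * (u1 * x2 - u2 * x1) by ring.
have e2 : u2 * (x1 * y2 - x2 * y1) = x2 * (u1 * y2 - u2 * y1) - y2 * (u1 * x2 - u2 * x1) by ring.
rewrite hx hy !mulr0 subr0 in e1 e2.
case: (eqVneq u1 0) => [z1|n1]; last by move/eqP: e1; rewrite mulf_eq0 (negbTE n1) => /eqP.
case: (eqVneq u2 0) => [z2|n2]; last by move/eqP: e2; rewrite mulf_eq0 (negbTE n2) => /eqP.
by move: u0; rewrite z1 z2 eqxx.
Qed.

Lemma uniq2 (u u' w : pt) : cross u u' != 0 -> cross u w = 0 -> cross u' w = 0 -> w = (0,0).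
Proof.
case: u u' w => [u1 u2] [v1 v2] [w1 w2]; rewrite /cross /= => d0 h1 h2.
have e1 : w1 * (u1 * v2 - u2 * v1) = v1 * (u1 * w2 - u2 * w1) - u1 * (v1 * w2 - v2 * w1) by ring.
have e2 : w2 * (u1 * v2 - u2 * v1) = v2 * (u1 * w2 - u2 * w1) - u2 * (v1 * w2 - v2 * w1) by ring.
rewrite h1 h2 !mulr0 subr0 in e1 e2.
move/eqP: e1; rewrite mulf_eq0 (negbTE d0) orbF => /eqP ->.
by move/eqP: e2; rewrite mulf_eq0 (negbTE d0) orbF => /eqP ->.
Qed.

Lemma sum_ind n (i : 'I_n) (F : 'I_n -> rat) : \sum_(k < n) (k == i)%:R * F k = F i.
Proof.
rewrite (bigD1 i) //= eqxx mul1r big1 ?addr0 // => k /negbTE ->; by rewrite mul0r.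
Qed.

Lemma in_hull3 (s : seq pt) (y1 y2 y3 : pt) (w1 w2 w3 : rat) (x : pt) :
  y1 \in s -> y2 \in s -> y3 \in s -> 0 <= w1 -> 0 <= w2 -> 0 <= w3 ->
  w1 + w2 + w3 = 1 ->
  x.1 = w1 * y1.1 + w2 * y2.1 + w3 * y3.1 ->
  x.2 = w1 * y1.2 + w2 * y2.2 + w3 * y3.2 -> in_hull s x.
Proof.
move=> m1 m2 m3 p1 p2 p3 hs hx1 hx2.
have h1 : (index y1 s < size s)%N by rewrite index_mem.
have h2 : (index y2 s < size s)%N by rewrite index_mem.
have h3 : (index y3 s < size s)%N by rewrite index_mem.
pose i1 := Ordinal h1. pose i2 := Ordinal h2. pose i3 := Ordinal h3.
have n1 : nth (0,0) s i1 = y1 by rewrite /= nth_index.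
have n2 : nth (0,0) s i2 = y2 by rewrite /= nth_index.
have n3 : nth (0,0) s i3 = y3 by rewrite /= nth_index.
exists (fun k => (k == i1)%:R * w1 + (k == i2)%:R * w2 + (k == i3)%:R * w3).
have key : forall F : 'I_(size s) -> rat,
  \sum_(k < size s) ((k == i1)%:R * w1 + (k == i2)%:R * w2 + (k == i3)%:R * w3) * F k
  = w1 * F i1 + w2 * F i2 + w3 * F i3.
  move=> F.
  transitivity (\sum_(k < size s) ((k == i1)%:R * (w1 * F k) + (k == i2)%:R * (w2 * F k) + (k == i3)%:R * (w3 * F k))).
    by apply: eq_bigr => k _; ring.
  by rewrite !big_split /= !sum_ind.
split; first by move=> k; rewrite !addr_ge0 // mulr_ge0 // ler0n.
split.
  transitivity (w1 * 1 + w2 * 1 + w3 * 1); last by rewrite !mulr1.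
  rewrite -(key (fun _ => 1)).
  by apply: eq_bigr => k _; rewrite !mulr1.
split.
  by rewrite (key (fun k => (nth (0,0) s k).1)) /= n1 n2 n3.
by rewrite (key (fun k => (nth (0,0) s k).2)) /= n1 n2 n3.
Qed.

Lemma hull_affine (s : seq pt) (x : pt) (al be ga : rat) (l : 'I_(size s) -> rat) :
  \sum_(k < size s) l k = 1 ->
  x.1 = \sum_(k < size s) l k * (nth (0, 0) s k).1 ->
  x.2 = \sum_(k < size s) l k * (nth (0, 0) s k).2 ->
  \sum_(k < size s) l k * (al * (nth (0,0) s k).1 + be * (nth (0,0) s k).2 + ga)
   = al * x.1 + be * x.2 + ga.
Proof.
move=> h1 hx hy.
transitivity (al * x.1 + be * x.2 + ga * \sum_(k < size s) l k); last by rewrite h1 mulr1.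
rewrite hx hy !mulr_sumr -!big_split /=.
by apply: eq_bigr => k _; ring.
Qed.

Lemma cross_aff (a b y : pt) : cross (subp b a) (subp y a) =
  (- (b.2 - a.2)) * y.1 + (b.1 - a.1) * y.2 + ((b.2 - a.2) * a.1 - (b.1 - a.1) * a.2).
Proof. rewrite /cross /subp /=; ring. Qed.

Lemma hull_line_zero (cs : seq pt) (p a b : pt) (l : 'I_(size cs) -> rat) :
  edge cs a b -> (forall k, 0 <= l k) -> \sum_(k < size cs) l k = 1 ->
  p.1 = \sum_(k < size cs) l k * (nth (0, 0) cs k).1 ->
  p.2 = \sum_(k < size cs) l k * (nth (0, 0) cs k).2 ->
  cross (subp b a) (subp p a) = 0 ->
  forall k, 0 < l k -> cross (subp b a) (subp (nth (0,0) cs k) a) = 0.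
Proof.
move=> [_ _ _ he] l0 h1 hx hy hp k lk.
have S : \sum_(k < size cs) l k * cross (subp b a) (subp (nth (0,0) cs k) a) = cross (subp b a) (subp p a).
  rewrite [RHS]cross_aff -(hull_affine _ _ _ h1 hx hy).
  by apply: eq_bigr => j _; rewrite cross_aff.
rewrite hp in S. have := psumr_eq0P _ S.
move=> /(_ (fun j _ => mulr_ge0 (l0 j) (he _ (mem_nth _ (ltn_ord j)))) k isT) /eqP.
by rewrite mulf_eq0 (gt_eqF lk) => /eqP.
Qed.

Lemma cross_sub (u y p a : pt) : cross u (subp y p) = cross u (subp y a) - cross u (subp p a).
Proof. rewrite /cross /subp /=; ring. Qed.

Lemma subp0 (y p : pt) : subp y p = (0,0) -> y = p.
Proof.
case: y p => [y1 y2] [p1 p2]; rewrite /subp /= => -[/subr0_eq -> /subr0_eq ->] //.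
Qed.

Lemma two_lines_corner cs p a b a' b' : edge cs a b -> edge cs a' b' ->
  cross (subp b a) (subp b' a') != 0 -> in_hull cs p ->
  cross (subp b a) (subp p a) = 0 -> cross (subp b' a') (subp p a') = 0 -> p \in cs.
Proof.
move=> e1 e2 nz [l [l0 [h1 [hx hy]]]] c1 c2.
have [k lk] : exists k, 0 < l k.
  apply: NNPP => H.
  have : \sum_(k < size cs) l k = 0.
    apply: big1 => k _; apply/eqP; rewrite eq_le l0 andbT leNgt; apply/negP => H'.
    by apply: H; exists k.
  by rewrite h1 => /eqP; rewrite oner_eq0.
have z1 := hull_line_zero e1 l0 h1 hx hy c1 lk.
have z2 := hull_line_zero e2 l0 h1 hx hy c2 lk.
have : subp (nth (0,0) cs k) p = (0,0).
  apply: (uniq2 nz); first by rewrite (cross_sub _ _ _ a) z1 c1 subr0.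
  by rewrite (cross_sub _ _ _ a') z2 c2 subr0.
move/subp0 <-; exact: mem_nth.
Qed.

Lemma cross_self (u : pt) : cross u u = 0.
Proof. rewrite /cross; ring. Qed.

Lemma tri_hull (T : seq pt) (p b y0 y : pt) (sg : rat) :
  b \in T -> y0 \in T -> y \in T ->
  sg * cross (subp b p) (subp y0 p) < 0 ->
  sg * cross (subp y0 p) (subp y p) < 0 ->
  0 <= sg * cross (subp b p) (subp y p) -> in_hull T p.
Proof.
move=> mb m0 my h1 h2 h3.
set al := sg * cross (subp y0 p) (subp y p).
set be := - (sg * cross (subp b p) (subp y p)).
set ga := sg * cross (subp b p) (subp y0 p).
have Sneg : al + be + ga < 0.
  by move: h1 h2 h3; rewrite /al /be /ga; lra.
have Sne : al + be + ga != 0 by rewrite lt_eqF.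
have E1 : al * b.1 + be * y0.1 + ga * y.1 = (al + be + ga) * p.1.
  by rewrite /al /be /ga /cross /subp /=; ring.
have E2 : al * b.2 + be * y0.2 + ga * y.2 = (al + be + ga) * p.2.
  by rewrite /al /be /ga /cross /subp /=; ring.
apply: (in_hull3 (w1 := al / (al + be + ga)) (w2 := be / (al + be + ga)) (w3 := ga / (al + be + ga)) mb m0 my).
- by apply: mulr_le0; [exact: ltW | rewrite invr_le0; exact: ltW].
- by apply: mulr_le0; [rewrite /be oppr_le0 | rewrite invr_le0; exact: ltW].
- by apply: mulr_le0; [exact: ltW | rewrite invr_le0; exact: ltW].
- by field.
- apply: (mulfI Sne); rewrite -E1; field; done.
- apply: (mulfI Sne); rewrite -E2; field; done.
Qed.

Lemma extreme_dir (T : seq pt) (p : pt) (sg : rat) (s : seq pt) :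
  {subset s <= T} -> s != [::] -> ~ in_hull T p ->
  exists2 b, b \in s & forall y, y \in s -> 0 <= sg * cross (subp b p) (subp y p).
Proof.
elim: s => [|y0 s' IH] // sub _ nh.
case: (eqVneq s' [::]) => [->|s'ne].
  by exists y0 => [|y]; rewrite ?inE // => /eqP ->; rewrite cross_self mulr0.
have sub' : {subset s' <= T} by move=> y hy; apply: sub; rewrite inE hy orbT.
have [b' bin hb'] := IH sub' s'ne nh.
case: (leP 0 (sg * cross (subp b' p) (subp y0 p))) => h.
  exists b'; first by rewrite inE bin orbT.
  by move=> y; rewrite inE => /orP [/eqP ->|]; [|apply: hb'].
exists y0; first by rewrite inE eqxx.
move=> y; rewrite inE => /orP [/eqP ->|hy]; first by rewrite cross_self mulr0.
rewrite leNgt; apply/negP => hlt; apply: nh.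
apply: (tri_hull (b := b') (y0 := y0) (y := y) (sg := sg)) => //.
- by apply: sub'.
- by apply: sub; rewrite inE eqxx.
- by apply: sub'.
- by apply: hb'.
Qed.

Lemma dotsq_pos (w : pt) : w != (0,0) -> 0 < dotp w w.
Proof.
case: w => [w1 w2]; rewrite /dotp /= => nz.
have h1 : 0 <= w1 * w1 by rewrite -expr2 sqr_ge0.
have h2 : 0 <= w2 * w2 by rewrite -expr2 sqr_ge0.
rewrite lt_def paddr_eq0 // !mulf_eq0 !orbb addr_ge0 // andbT.
apply/negP => /andP [/eqP e1 /eqP e2]; by move: nz; rewrite e1 e2 eqxx.
Qed.

Lemma par_combo (u w : pt) : cross u w = 0 ->
  dotp w w * u.1 = dotp u w * w.1 /\ dotp w w * u.2 = dotp u w * w.2.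
Proof.
case: u w => [u1 u2] [w1 w2]; rewrite /cross /dotp /= => h; split.
  have -> : (w1 * w1 + w2 * w2) * u1 = (u1 * w1 + u2 * w2) * w1 + w2 * (u1 * w2 - u2 * w1) by ring.
  by rewrite h mulr0 addr0.
have -> : (w1 * w1 + w2 * w2) * u2 = (u1 * w1 + u2 * w2) * w2 - w1 * (u1 * w2 - u2 * w1) by ring.
by rewrite h mulr0 subr0.
Qed.

Lemma par_cross (u w x : pt) : cross u w = 0 ->
  dotp w w * cross u x = dotp u w * cross w x.
Proof.
move=> h; have [e1 e2] := par_combo h; move: e1 e2.
case: u w x h => [u1 u2] [w1 w2] [x1 x2]; rewrite /cross /dotp /= => h e1 e2.
have -> : (w1 * w1 + w2 * w2) * (u1 * x2 - u2 * x1) = ((w1 * w1 + w2 * w2) * u1) * x2 - ((w1 * w1 + w2 * w2) * u2) * x1 by ring.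
rewrite e1 e2; ring.
Qed.

Lemma subp_neq0 (b p : pt) : b != p -> subp b p != (0,0).
Proof. by move=> h; apply/eqP => /subp0 e; move: h; rewrite e eqxx. Qed.

Lemma cross_diff3 (a b e p : pt) : cross (subp b a) (subp e a) =
  cross (subp b p) (subp e p) - cross (subp b p) (subp a p) - cross (subp a p) (subp e p).
Proof. rewrite /cross /subp /=; ring. Qed.

Lemma corner_edges cs p : is_board cs -> p \in cs ->
  exists a b a' b', [/\ edge cs a b, edge cs a' b', cross (subp b a) (subp b' a') != 0,
     cross (subp b a) (subp p a) = 0 & cross (subp b' a') (subp p a') = 0].
Proof.
move=> [_ [ext [a0 [b0 [e0 [ma mb me nc]]]]]] hp.
set T := [seq y <- cs | y != p].
have nh := ext p hp.
have inT : forall y, y \in cs -> y != p -> y \in T by move=> y hy hyp; rewrite mem_filter hyp.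
have Tne : T != [::].
  apply/negP => /eqP T0.
  have allp : forall y, y \in cs -> y = p.
    move=> y hy; apply/eqP; apply: contraT => hyp.
    by have := inT y hy hyp; rewrite T0.
  by move: nc; rewrite (allp _ ma) (allp _ mb) (allp _ me) cross_self eqxx.
have [b1 m1 h1] := extreme_dir 1 (fun y (hy : y \in T) => hy) Tne nh.
have [b2 m2 h2] := extreme_dir (-1) (fun y (hy : y \in T) => hy) Tne nh.
move: m1 m2; rewrite !mem_filter => /andP [n1 c1] /andP [n2 c2].
have pp : forall u : pt, cross u (subp p p) = 0 by move=> u; rewrite /cross /subp /=; ring.
have H1 : forall y, y \in cs -> 0 <= cross (subp b1 p) (subp y p).
  move=> y hy; case: (eqVneq y p) => [->|hyp]; first by rewrite pp.
  by rewrite -(mul1r (cross _ _)); apply: h1; apply: inT.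
have H2 : forall y, y \in cs -> cross (subp b2 p) (subp y p) <= 0.
  move=> y hy; case: (eqVneq y p) => [->|hyp]; first by rewrite pp.
  by rewrite -oppr_ge0 -mulN1r; apply: h2; apply: inT.
have E1 : edge cs p b1 by split => //; rewrite eq_sym.
have E2 : edge cs b2 p.
  split => // y hy.
  have -> : cross (subp p b2) (subp y b2) = - cross (subp b2 p) (subp y p)
    by rewrite /cross /subp /=; ring.
  by rewrite oppr_ge0 H2.
exists p, b1, b2, p; split => //; last by rewrite cross_self.
have -> : cross (subp b1 p) (subp p b2) = - cross (subp b1 p) (subp b2 p)
  by rewrite /cross /subp /=; ring.
rewrite oppr_eq0; apply/negP => /eqP cuw.
set u := subp b1 p in H1 cuw *; set w := subp b2 p in H2 cuw *.
have unz : u != (0,0) by apply: subp_neq0.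
have wnz : w != (0,0) by apply: subp_neq0.
have wwp := dotsq_pos wnz.
case: (ltP (dotp u w) 0) => huw.
  (* p between b1 and b2 *)
  apply: nh.
  have [e1 e2] := par_combo cuw.
  have Sp : 0 < dotp w w - dotp u w by lra.
  have Sne : dotp w w - dotp u w != 0 by rewrite gt_eqF.
  apply: (in_hull3 (w1 := dotp w w / (dotp w w - dotp u w))
                   (w2 := - dotp u w / (dotp w w - dotp u w)) (w3 := 0)
                   (y1 := b1) (y2 := b2) (y3 := b2)) => //.
  - by rewrite mem_filter n1 c1.
  - by rewrite mem_filter n2 c2.
  - by rewrite mem_filter n2 c2.
  - by apply: divr_ge0; [exact: ltW | exact: ltW].
  - by apply: divr_ge0; [rewrite oppr_ge0; exact: ltW | exact: ltW].
  - by field.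
  - move: e1; rewrite /u /w /subp /= => e1.
    apply: (mulfI Sne); rewrite mul0r addr0.
    transitivity (dotp w w * b1.1 - dotp u w * b2.1); last by field.
    by rewrite /w; move: e1; rewrite /w; lra.
  - move: e2; rewrite /u /w /subp /= => e2.
    apply: (mulfI Sne); rewrite mul0r addr0.
    transitivity (dotp w w * b1.2 - dotp u w * b2.2); last by field.
    by rewrite /w; move: e2; rewrite /w; lra.
have col : forall y, y \in cs -> cross u (subp y p) = 0.
  move=> y hy; have := par_cross (subp y p) cuw.
  have := H1 y hy; have := H2 y hy => g2 g1 eq.
  have : dotp w w * cross u (subp y p) <= 0.
    by rewrite eq; apply: mulr_ge0_le0.
  rewrite pmulr_rle0 // => g3; apply/eqP; rewrite eq_le g3 g1.
  done.
move: nc; rewrite (cross_diff3 _ _ _ p).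
rewrite !(par_trans unz (col _ mb) (col _ me)) !(par_trans unz (col _ mb) (col _ ma)).
rewrite (par_trans unz (col _ ma) (col _ me)) !subr0 eqxx //.
Qed.

Lemma min_ex (Q : nat -> Prop) : (exists m, Q m) -> exists m, Q m /\ forall k, (k < m)%N -> ~ Q k.
Proof.
move=> [m Qm]; apply: NNPP => H.
have : forall n k, (k <= n)%N -> ~ Q k.
  elim => [|n IH] k hk Qk.
    by apply: H; exists k; split => // k'; move: hk; rewrite leqn0 => /eqP ->.
  case: (leqP k n) => hkn; first exact: IH hkn Qk.
  apply: H; exists k; split => // k' hk'; apply: IH; rewrite -ltnS.
  exact: leq_trans hk' hk.
by move=> /(_ m m (leqnn m)).
Qed.

Lemma lcm_exists (P : nat -> Prop) : exists D, lcm_of P D.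
Proof.
case: (classic (exists m, (0 < m)%N /\ forall n, P n -> (n %| m)%N)) => [ex|nex].
  have [D [[Dp HD] Dmin]] := min_ex ex.
  exists D => m; split.
    by move=> Dm n Pn; apply: dvdn_trans (HD n Pn) Dm.
  move=> H; case: (posnP m) => [->|mp]; first exact: dvdn0.
  have gp : (0 < gcdn D m)%N by rewrite gcdn_gt0 Dp.
  have gc : forall n, P n -> (n %| gcdn D m)%N by move=> n Pn; rewrite dvdn_gcd HD ?H.
  have gle : (gcdn D m <= D)%N by apply: dvdn_leq => //; apply: dvdn_gcdl.
  case: (ltnP (gcdn D m) D) => hl; first by case: (Dmin _ hl).
  have -> : D = gcdn D m by apply/eqP; rewrite eqn_leq hl gle.
  exact: dvdn_gcdr.
exists 0%N => m; rewrite dvd0n; split; first by move=> /eqP -> n _; apply: dvdn0.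
move=> H; apply/eqP; apply: NNPP => hm; apply: nex; exists m; split => //.
by rewrite lt0n; apply/eqP.
Qed.

Lemma hull_mem cs p : p \in cs -> in_hull cs p.
Proof.
move=> hp; apply: (in_hull3 (w1 := 1) (w2 := 0) (w3 := 0) hp hp hp) => //=; ring.
Qed.

Lemma den_sup q (z : 'I_q -> pt) i : (den2 (z i) %| denq_cfg z)%N.
Proof. by apply: (biglcmn_sup i). Qed.

Lemma corner_vertex (c d : int) cs q p : is_board cs -> (0 < q)%N -> p \in cs ->
  exists z : 'I_q -> pt, is_vertex c d cs z /\ (den2 p %| denq_cfg z)%N.
Proof.
move=> hb q0 hp.
have [a [b [a' [b' [e1 e2 nz l1 l2]]]]] := corner_edges hb hp.
exists (fun _ => p); split; last exact: (den_sup _ (Ordinal q0)).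
split; first by move=> _; apply: hull_mem.
exists (fun k => match k with CF _ x y => (x, y) = (a, b) \/ (x, y) = (a', b') | CH _ _ => False end).
split.
  by case => // i x y /= [[-> ->]|[-> ->]].
move=> w; split.
  move=> H i.
  have h1 := H (CF i a b) (or_introl erefl).
  have h2 := H (CF i a' b') (or_intror erefl).
  simpl in h1, h2.
  apply: subp0; apply: (uniq2 nz).
    by rewrite (cross_sub _ _ _ a) h1 l1 subr0.
  by rewrite (cross_sub _ _ _ a') h2 l2 subr0.
by move=> H; case => // i x y /= [[-> ->]|[-> ->]]; rewrite H.
Qed.

Lemma cross_anti (u w : pt) : cross u w = - cross w u.
Proof. rewrite /cross; ring. Qed.

Lemma dot_cross (c d : int) (x : pt) : dotp x (d%:~R, - c%:~R) = cross x (mv c d).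
Proof. rewrite /dotp /cross /mv /=; ring. Qed.

Lemma mv_neq0 (c d : int) : coprimez c d -> mv c d != (0,0).
Proof.
move=> co; apply/negP => /eqP [] /eqP; rewrite intr_eq0 => /eqP c0 /eqP; rewrite intr_eq0 => /eqP d0.
by move: co; rewrite c0 d0.
Qed.

Lemma cross_subl (u x y : pt) : cross (subp u x) y = cross u y - cross x y.
Proof. rewrite /cross /subp /=; ring. Qed.

Lemma line_par_edge c d cs z0 a b : coprimez c d -> z0 \in cs -> edge cs a b ->
  cross (subp b a) (subp z0 a) = 0 -> cross (subp b a) (mv c d) = 0 ->
  exists z', par_edge c d cs z0 z'.
Proof.
move=> co hz eab hx hv.
have [ma mb nab he] := eab.
set u := subp b a in hx hv he; set x := subp z0 a in hx.
have unz : u != (0,0) by apply: subp_neq0; rewrite eq_sym.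
have uup := dotsq_pos unz.
have xv : cross x (mv c d) = 0 by apply: (par_trans unz).
have key : forall y, y \in cs -> dotp u u * cross x (subp y a) = dotp x u * cross u (subp y a).
  move=> y _; apply: par_cross; by rewrite cross_anti hx oppr0.
case: (ltP 0 (dotp u u - dotp u x)) => hlt.
  exists b; split; last first.
    have -> : subp b z0 = subp u x by rewrite /u /x /subp /=; apply: pt_eq => /=; ring.
    by rewrite cross_subl hv xv subr0.
  left; split => //.
    apply/negP => /eqP ez; move: hlt; rewrite /x ez -/u /dotp; lra.
  move=> y hy.
  have -> : cross (subp b z0) (subp y z0) = cross u (subp y a) - cross x (subp y a) - cross u x.
    rewrite /u /x /cross /subp /=; ring.
  rewrite hx subr0.
  have := key y hy; have := he y hy => g1 g2.
  have : 0 <= dotp u u * (cross u (subp y a) - cross x (subp y a)).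
    rewrite mulrBr g2 -mulrBl.
    have -> : dotp u u - dotp x u = dotp u u - dotp u x by rewrite /dotp; ring.
    apply: mulr_ge0 => //; exact: ltW.
  by rewrite pmulr_rge0.
exists a; split; last first.
  have -> : subp a z0 = subp (0,0) x by rewrite /x /subp /=; apply: pt_eq => /=; ring.
  by rewrite cross_subl xv subr0 /cross /=; ring.
right; split => //.
  apply/negP => /eqP ez; move: hlt uup; rewrite /x -ez /dotp /subp /=; lra.
move=> y hy.
have := key y hy; have := he y hy => g1 g2.
have : 0 <= dotp u u * cross x (subp y a).
  rewrite g2; apply: mulr_ge0 => //.
  have -> : dotp x u = dotp u x by rewrite /dotp; ring.
  lra.
by rewrite pmulr_rge0.
Qed.

Lemma antipode_vertex (c d : int) cs q z0 p : coprimez c d -> is_board cs -> (1 < q)%N ->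
  z0 \in cs -> antipode c d cs z0 p ->
  exists z : 'I_q -> pt, is_vertex c d cs z /\ (den2 p %| denq_cfg z)%N.
Proof.
move=> co hb q1 hz [[[[_ hp _ _]|[hp _ _ _]] _]|]; try exact: corner_vertex (ltnW q1) hp.
move=> [nope [[hh [a [b [eab lab]]]] [pne cp]]].
have vnz := mv_neq0 co.
have nzv : cross (subp b a) (mv c d) != 0.
  apply/negP => /eqP hv; apply: nope; apply: (line_par_edge co hz eab) => //.
  have -> : cross (subp b a) (subp z0 a) = cross (subp b a) (subp p a) - cross (subp b a) (subp p z0)
    by rewrite /cross /subp /=; ring.
  rewrite lab sub0r.
  rewrite (par_trans vnz (y := subp p z0)) ?oppr0 //.
    by rewrite cross_anti hv oppr0.
  by rewrite cross_anti cp oppr0.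
have [a1 [b1 [a2 [b2 [e1 e2 nz l1 l2]]]]] := corner_edges hb hz.
have q0 : (0 < q)%N by apply: ltnW.
pose o0 : 'I_q := Ordinal q0.
pose o1 : 'I_q := Ordinal q1.
exists (fun i : 'I_q => if (i : nat) == 0%N then z0 else p); split; last first.
  by have := den_sup (fun i : 'I_q => if (i : nat) == 0%N then z0 else p) o1.
split; first by move=> i; case: ifP => _ //; apply: hull_mem.
exists (fun k => match k with
  | CH i j => (i : nat) = 0%N /\ (j : nat) <> 0%N
  | CF i x y => ((i : nat) = 0%N /\ ((x, y) = (a1, b1) \/ (x, y) = (a2, b2))) \/
                ((i : nat) <> 0%N /\ (x, y) = (a, b)) end).
split.
  case => [i j|i x y] /=; first by move=> [-> /eqP]; rewrite lt0n.
  by move=> [[_ [[-> ->]|[-> ->]]]|[_ [-> ->]]].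
move=> w; split.
  move=> H.
  have w0 : w o0 = z0.
    have h1 := H (CF o0 a1 b1) (or_introl (conj erefl (or_introl erefl))).
    have h2 := H (CF o0 a2 b2) (or_introl (conj erefl (or_intror erefl))).
    simpl in h1, h2.
    apply: subp0; apply: (uniq2 nz).
      by rewrite (cross_sub _ _ _ a1) h1 l1 subr0.
    by rewrite (cross_sub _ _ _ a2) h2 l2 subr0.
  move=> i; case: eqP => i0.
    by rewrite -w0; congr w; apply: val_inj.
  have h1 := H (CF i a b) (or_intror (conj i0 erefl)).
  have h2 := H (CH o0 i) (conj erefl i0).
  simpl in h1, h2; rewrite w0 dot_cross in h2.
  apply: subp0; apply: (uniq2 nzv).
    by rewrite (cross_sub _ _ _ a) h1 lab subr0.
  rewrite cross_anti.
  have -> : cross (subp (w i) p) (mv c d) = cross (subp (w i) z0) (mv c d) - cross (subp p z0) (mv c d)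
    by rewrite /cross /subp /=; ring.
  by rewrite h2 cp subr0 oppr0.
move=> H; case => [i j|i x y] /=.
  by move=> [i0 j0]; rewrite !H i0 /=; case: eqP => // _; rewrite dot_cross.
move=> [[i0 [[-> ->]|[-> ->]]]|[i0 [-> ->]]]; rewrite H.
- by case: eqP.
- by case: eqP.
- by case: eqP.
Qed.

Lemma perturb (c d : int) q (S : constr q -> Prop) (z t : 'I_q -> pt) :
  (forall k, S k -> cholds c d k z) ->
  (forall i1 i2, S (CH i1 i2) -> cross (subp (t i2) (t i1)) (mv c d) = 0) ->
  (forall i a b, S (CF i a b) -> cross (subp b a) (t i) = 0) ->
  forall k, S k -> cholds c d k (fun k => ((z k).1 + (t k).1, (z k).2 + (t k).2)).
Proof.
move=> Hz H1 H2 k Sk; have := Hz k Sk; move: Sk.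
case: k => [i1 i2|i a b] /= Sk; rewrite ?dot_cross => h.
  have -> : cross (subp ((z i2).1 + (t i2).1, (z i2).2 + (t i2).2) ((z i1).1 + (t i1).1, (z i1).2 + (t i1).2)) (mv c d)
    = cross (subp (z i2) (z i1)) (mv c d) + cross (subp (t i2) (t i1)) (mv c d)
    by rewrite /cross /subp /=; ring.
  by rewrite h H1 // addr0.
have -> : cross (subp b a) (subp ((z i).1 + (t i).1, (z i).2 + (t i).2) a)
  = cross (subp b a) (subp (z i) a) + cross (subp b a) (t i) by rewrite /cross /subp /=; ring.
by rewrite h H2 // addr0.
Qed.

Lemma step1 (c d : int) q (S : constr q -> Prop) (z : 'I_q -> pt) :
  coprimez c d ->
  (forall w : 'I_q -> pt, (forall k, S k -> cholds c d k w) <-> (forall i, w i = z i)) ->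
  forall j, exists a b, S (CF j a b) /\ cross (subp b a) (mv c d) != 0.
Proof.
move=> co HS j; apply: NNPP => H.
pose e := fun k : 'I_q => ((k == j)%:R : rat).
pose t := fun k => (e k * (mv c d).1, e k * (mv c d).2).
have Hz := (HS z).2 (fun _ => erefl).
have := perturb (t := t) Hz.
move=> /(_ _ _) /(_ _) P.
have E : forall i, (fun k => ((z k).1 + (t k).1, (z k).2 + (t k).2)) i = z i.
  apply: (HS _).1; apply: P.
    move=> i1 i2 _.
    have -> : cross (subp (t i2) (t i1)) (mv c d) = (e i2 - e i1) * cross (mv c d) (mv c d)
      by rewrite /cross /subp /=; ring.
    by rewrite cross_self mulr0.
  move=> i a b Sab.
  have -> : cross (subp b a) (t i) = e i * cross (subp b a) (mv c d) by rewrite /cross /=; ring.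
  rewrite /e; case: eqP => [ij|_]; last by rewrite mul0r.
  subst i; case: (eqVneq (cross (subp b a) (mv c d)) 0) => [->|nz]; first by rewrite mulr0.
  by case: H; exists a, b.
have E1 := congr1 fst (E j); have E2 := congr1 snd (E j).
rewrite /= /t /e eqxx !mul1r in E1 E2.
have : mv c d = (0,0).
  apply: pt_eq => /=.
    by apply: (addrI (z j).1); rewrite addr0.
  by apply: (addrI (z j).2); rewrite addr0.
by move/eqP; rewrite (negbTE (mv_neq0 co)).
Qed.

Lemma step2 (c d : int) cs q (S : constr q -> Prop) (z : 'I_q -> pt) :
  coprimez c d -> (forall i, in_hull cs (z i)) -> (forall k, S k -> cvalid cs k) ->
  (forall w : 'I_q -> pt, (forall k, S k -> cholds c d k w) <-> (forall i, w i = z i)) ->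
  forall i, exists j, cross (subp (z j) (z i)) (mv c d) = 0 /\ z j \in cs.
Proof.
move=> co hull Sv HS i; apply: NNPP => H.
have st := step1 co HS.
have st' : forall j, exists ab : pt * pt, S (CF j ab.1 ab.2) /\ cross (subp ab.2 ab.1) (mv c d) != 0.
  by move=> j; have [a [b hab]] := st j; exists (a, b).
pose f := fun j => proj1_sig (constructive_indefinite_description _ (st' j)).
have hf : forall j, S (CF j (f j).1 (f j).2) /\ cross (subp (f j).2 (f j).1) (mv c d) != 0.
  by move=> j; rewrite /f; case: constructive_indefinite_description.
pose K := fun j => cross (subp (z j) (z i)) (mv c d) == 0.
pose u := fun j => subp (f j).2 (f j).1.
pose e := fun j => if K j then (cross (u j) (mv c d))^-1 else 0.
pose t := fun j => (e j * (u j).1, e j * (u j).2).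
have Hz := (HS z).2 (fun _ => erefl).
have eu : forall j, e j * cross (u j) (mv c d) = (K j)%:R.
  move=> j; rewrite /e; case: (K j); last by rewrite mul0r.
  by rewrite mulVf //; have [_ ] := hf j.
have E : forall j, (fun k => ((z k).1 + (t k).1, (z k).2 + (t k).2)) j = z j.
  apply: (HS _).1; apply: perturb => //.
    move=> i1 i2 Sk.
    have hz := Hz _ Sk; simpl in hz; rewrite dot_cross in hz.
    have -> : cross (subp (t i2) (t i1)) (mv c d) = e i2 * cross (u i2) (mv c d) - e i1 * cross (u i1) (mv c d)
      by rewrite /cross /subp /=; ring.
    rewrite !eu.
    have -> : K i2 = K i1; last by rewrite subrr.
    rewrite /K.
    have -> : cross (subp (z i2) (z i)) (mv c d) = cross (subp (z i2) (z i1)) (mv c d) + cross (subp (z i1) (z i)) (mv c d)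
      by rewrite /cross /subp /=; ring.
    by rewrite hz add0r.
  move=> j a b Sab.
  have -> : cross (subp b a) (t j) = e j * cross (subp b a) (u j) by rewrite /cross /=; ring.
  rewrite /e; case Kj: (K j); last by rewrite mul0r.
  case: (eqVneq (cross (subp b a) (u j)) 0) => [->|nz]; first by rewrite mulr0.
  exfalso; apply: H; exists j; split; first by apply/eqP.
  have [Sf _] := hf j.
  have e1 := Sv _ Sab; have e2 := Sv _ Sf; simpl in e1, e2.
  have h1 := Hz _ Sab; have h2 := Hz _ Sf; simpl in h1, h2.
  exact: (two_lines_corner e1 e2 nz (hull j) h1 h2).
have E1 := congr1 fst (E i); have E2 := congr1 snd (E i).
simpl in E1, E2.
have t0 : t i = (0,0).
  apply: pt_eq => /=.
    by apply: (addrI (z i).1); rewrite addr0.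
  by apply: (addrI (z i).2); rewrite addr0.
have Ki : K i by rewrite /K /subp /cross /=; apply/eqP; ring.
have := eu i; rewrite Ki.
have -> : e i * cross (u i) (mv c d) = cross (t i) (mv c d) by rewrite /cross /t /=; ring.
by rewrite t0 /cross /= !mul0r subrr => /eqP; rewrite eq_sym oner_eq0.
Qed.

Lemma swap_sub (x y w : pt) : cross w (subp x y) = cross (subp y x) w.
Proof. rewrite /cross /subp /=; ring. Qed.

Lemma vertex_class (c d : int) cs q (z : 'I_q -> pt) : coprimez c d ->
  is_vertex c d cs z -> forall i, z i \in cs \/
    ((1 < q)%N /\ exists z0, z0 \in cs /\ antipode c d cs z0 (z i)).
Proof.
move=> co [hull [S [Sv HS]]] i.
have vnz := mv_neq0 co.
have Hz := (HS z).2 (fun _ => erefl).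
have [j [cj zj]] := step2 co hull Sv HS i.
have [a [b [Sab nzab]]] := step1 co HS i.
have eab := Sv _ Sab; have lab := Hz _ Sab; simpl in eab, lab.
case: (boolP (z i \in cs)) => zi; [by left | right].
have ij : i != j by apply/negP => /eqP e; move: zi; rewrite e zj.
split.
  rewrite ltnNge; apply/negP => hq.
  have hi := leq_trans (ltn_ord i) hq; have hj := leq_trans (ltn_ord j) hq.
  move: ij; rewrite -val_eqE /=.
  by move: hi hj; rewrite !ltnS !leqn0 => /eqP -> /eqP ->.
exists (z j); split => //.
case: (classic (exists z', par_edge c d cs (z j) z')) => [[z' [E cz']]|nope].
  exfalso; move/negP: zi; apply.
  have zz : subp z' (z j) != (0,0).
    by apply: subp_neq0; case: E => -[_ _ h _] //; rewrite eq_sym.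
  have lin : cross (subp z' (z j)) (subp (z i) (z j)) = 0.
    apply: (par_trans vnz); first by rewrite cross_anti cz' oppr0.
    by rewrite swap_sub cj.
  have npar : cross (subp b a) (subp z' (z j)) != 0.
    apply/negP => /eqP h; move/negP: nzab; apply; apply/eqP.
    apply: (par_trans zz); first by rewrite cross_anti h oppr0.
    exact: cz'.
  case: E => E.
    exact: (two_lines_corner eab E npar (hull i) lab).
  apply: (two_lines_corner eab E (b' := z j) (a' := z')).
  - have -> : cross (subp b a) (subp (z j) z') = - cross (subp b a) (subp z' (z j))
      by rewrite /cross /subp /=; ring.
    by rewrite oppr_eq0.
  - exact: hull i.
  - exact: lab.
  have -> : cross (subp (z j) z') (subp (z i) z') = - cross (subp z' (z j)) (subp (z i) (z j))
    by rewrite /cross /subp /=; ring.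
  by rewrite lin oppr0.
right; split => //; split.
  by split; [exact: hull i | exists a, b].
split; first by move=> e; move: zi; rewrite e zj.
have -> : cross (subp (z i) (z j)) (mv c d) = - cross (subp (z j) (z i)) (mv c d)
  by rewrite /cross /subp /=; ring.
by rewrite cj oppr0.
Qed.

Unset Implicit Arguments.
Theorem proposition4p1 (c d : int) (cs : seq pt) (q : nat) :
  coprimez c d -> is_board cs -> (0 < q)%N ->
  exists D : nat,
    lcm_of (fun n => exists z : 'I_q -> pt, is_vertex c d cs z /\ n = denq_cfg z) D /\
    lcm_of (fun n => exists p,
              (p \in cs \/
               ((1 < q)%N /\ exists z, z \in cs /\ antipode c d cs z p)) /\
              n = den2 p) D.
Proof.
move=> co hb q0.
set P2 := (fun n => exists p, _).
have [D HD] := lcm_exists P2.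
exists D; split => //.
move=> m; rewrite HD; split.
  move=> H n [p [hp ->]].
  have [z [vz dz]] : exists z : 'I_q -> pt, is_vertex c d cs z /\ (den2 p %| denq_cfg z)%N.
    case: hp => [hp|[q1 [z0 [hz ha]]]]; first exact: corner_vertex.
    exact: antipode_vertex ha.
  apply: dvdn_trans dz _; apply: H; by exists z.
move=> H n [z [vz ->]].
apply/dvdn_biglcmP => i _.
apply: H; exists (z i); split => //.
exact: vertex_class.
Qed.
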